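(* Let $r\ge4$ and let $N$ be a matroid. A tensor product of $M(r)$ and $N$ exists if and only if the simplification of $N$ is a free matroid (a matroid in which every subset is independent).
   Context: Quasi product of matroids $M,N$: a matroid $P$ on $E(M)\times E(N)$ such that for every non-loop $e\in E(M)$, $x\mapsto(e,x)$ is an isomorphism $N\cong P|_{\{e\}\times E(N)}$; for every non-loop $f\in E(N)$, $x\mapsto(x,f)$ is an isomorphism $M\cong P|_{E(M)\times\{f\}}$; and the rows $\{e\}\times E(N)$ with $e$ a loop of $M$ and columns $E(M)\times\{f\}$ with $f$ a loop of $N$ have rank $0$. A tensor product is a quasi product of rank $\mathrm{rk}(M)\mathrm{rk}(N)$. Lindström matroid $M(r)$: with $A,B,C,D$ pairwise disjoint of size $r-2$, $E_r=A\cup B\cup C\cup D$, $\mathcal{H}=\{A\cup B,A\cup C,A\cup D,B\cup C,B\cup D\}$, $M(r)$ is the rank-$r$ matroid on $E_r$ with $\mathrm{rk}(X)=\min(|X|,r-1)$ if $X\subseteq H$ for some $H\in\mathcal{H}$, and $\min(|X|,r)$ otherwise. *)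

(* Defs.v *)
From mathcomp Require Import all_boot.
Set Implicit Arguments. Unset Strict Implicit. Unset Printing Implicit Defensive.

Definition is_matroid (E : finType) (rk : {set E} -> nat) : Prop :=
  [/\ forall X : {set E}, rk X <= #|X|,
      forall X Y : {set E}, X \subset Y -> rk X <= rk Y
    & forall X Y : {set E}, rk (X :|: Y) + rk (X :&: Y) <= rk X + rk Y].

Definition is_loop (E : finType) (rk : {set E} -> nat) (e : E) : bool :=
  rk [set e] == 0.

Definition parallel (E : finType) (rk : {set E} -> nat) (e f : E) : bool :=
  [&& e != f, ~~ is_loop rk e, ~~ is_loop rk f & rk [set e; f] == 1].

Definition simplification_set (E : finType) (rk : {set E} -> nat) (T : {set E}) : Prop :=
  [/\ forall e, e \in T -> ~~ is_loop rk e,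
      forall e f, e \in T -> f \in T -> ~~ parallel rk e f
    & forall e, ~~ is_loop rk e -> e \notin T -> exists2 f, f \in T & parallel rk e f].

Definition simplification_free (E : finType) (rk : {set E} -> nat) : Prop :=
  exists T : {set E}, simplification_set rk T /\
    forall X : {set E}, X \subset T -> rk X = #|X|.

Definition quasi_product (EM EN : finType) (rkM : {set EM} -> nat)
  (rkN : {set EN} -> nat) (rkP : {set (EM * EN)} -> nat) : Prop :=
  [/\ is_matroid rkP,
      forall e : EM, ~~ is_loop rkM e ->
        forall X : {set EN}, rkP [set (e, x) | x in X] = rkN X,
      forall f : EN, ~~ is_loop rkN f ->
        forall X : {set EM}, rkP [set (x, f) | x in X] = rkM X,
      forall e : EM, is_loop rkM e -> rkP [set (e, x) | x : EN] = 0
    & forall f : EN, is_loop rkN f -> rkP [set (x, f) | x : EM] = 0].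

Definition tensor_product (EM EN : finType) (rkM : {set EM} -> nat)
  (rkN : {set EN} -> nat) (rkP : {set (EM * EN)} -> nat) : Prop :=
  quasi_product rkM rkN rkP /\ rkP setT = rkM setT * rkN setT.

Definition has_tensor_product (EM EN : finType) (rkM : {set EM} -> nat)
  (rkN : {set EN} -> nat) : Prop :=
  exists rkP : {set (EM * EN)} -> nat, tensor_product rkM rkN rkP.

(* Lindström matroid M(r): ground set A ∪ B ∪ C ∪ D encoded as 'I_4 * 'I_(r-2),
   where part 0 = A, 1 = B, 2 = C, 3 = D. *)
Definition lindstrom_E (r : nat) : finType := ('I_4 * 'I_(r - 2))%type.

(* H = {A∪B, A∪C, A∪D, B∪C, B∪D} as pairs of part indices. *)
Definition lindstrom_hyps : seq ('I_4 * 'I_4) :=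
  [:: (inord 0, inord 1); (inord 0, inord 2); (inord 0, inord 3);
      (inord 1, inord 2); (inord 1, inord 3)].

Definition lindstrom_part (r : nat) (p : 'I_4 * 'I_4) : {set lindstrom_E r} :=
  [set x : lindstrom_E r | (x.1 == p.1) || (x.1 == p.2)].

Definition lindstrom_rk (r : nat) (X : {set lindstrom_E r}) : nat :=
  if has (fun p => X \subset lindstrom_part r p) lindstrom_hyps
  then minn #|X| (r - 1) else minn #|X| r.

(* Main.v *)
Require Import Defs.
From mathcomp Require Import all_boot zify.
Set Implicit Arguments. Unset Strict Implicit. Unset Printing Implicit Defensive.

Section Gen.
Variable T : finType.
Variable rk : {set T} -> nat.
Hypothesis hmono : forall X Y : {set T}, X \subset Y -> rk X <= rk Y.
Hypothesis hsub : forall X Y : {set T}, rk (X :|: Y) + rk (X :&: Y) <= rk X + rk Y.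
Implicit Types X Y S A I U : {set T}.

Lemma g_submodI X Y U I : U \subset X :|: Y -> I \subset X :&: Y ->
  rk U + rk I <= rk X + rk Y.
Proof.
move=> hU hI.
have := hsub X Y; have := hmono hU; have := hmono hI; lia.
Qed.

Lemma g_subadd X Y : rk (X :|: Y) <= rk X + rk Y.
Proof. have := hsub X Y; lia. Qed.

Lemma g_closure1 A S x : A \subset S -> rk (x |: A) <= rk A -> rk (x |: S) <= rk S.
Proof.
move=> hAS hx.
have := g_submodI (X := x |: A) (Y := S) (U := x |: S) (I := A).
have h1 : x |: S \subset (x |: A) :|: S.
  by apply/subsetP=> y; rewrite !inE; case/orP=> ->; rewrite ?orbT.
have h2 : A \subset (x |: A) :&: S by rewrite subsetI subsetUr hAS.
move=> /(_ h1 h2); lia.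
Qed.

Lemma g_closure S X : (forall x, x \in X -> exists2 A : {set T}, A \subset S & rk (x |: A) <= rk A) ->
  rk (S :|: X) <= rk S.
Proof.
move: {2}#|X| (leqnn #|X|) => n; elim: n X => [|n IH] X hX hcl.
  move: hX; rewrite leqn0 cards_eq0 => /eqP ->; by rewrite setU0.
case: (set_0Vmem X) => [->|[x xX]]; first by rewrite setU0.
have hX' : #|X :\ x| <= n by move: hX; rewrite (cardsD1 x X) xX; lia.
have e : S :|: X = x |: (S :|: (X :\ x)).
  apply/setP=> y; rewrite !inE; case: (y =P x) => [->|]; first by rewrite xX !orbT.
  by [].
have IH' := IH (X :\ x) hX' (fun y hy => hcl y (subsetP (subsetDl X [set x]) y hy)).
rewrite e; apply: leq_trans IH'.
have [A hA hAx] := hcl x xX.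
apply: g_closure1 hAx; apply: subset_trans hA (subsetUl _ _).
Qed.

Lemma g_closureS S X : (forall x, x \in X -> rk (x |: S) <= rk S) -> rk (S :|: X) <= rk S.
Proof. move=> h; apply: g_closure => x /h hx; by exists S. Qed.
End Gen.

Definition cs (EM EN : finType) (Y : {set EM}) (f : EN) : {set EM * EN} :=
  [set p | (p.1 \in Y) && (p.2 == f)].

Section Key.
Variables (EM EN : finType) (Q : {set EM * EN} -> nat) (rkM : {set EM} -> nat).
Hypothesis Qmono : forall X Y : {set EM * EN}, X \subset Y -> Q X <= Q Y.
Hypothesis Qsub : forall X Y : {set EM * EN}, Q (X :|: Y) + Q (X :&: Y) <= Q X + Q Y.
Variables (c1 c2 c3 : EN) (z r m h : nat) (a b c d : {set EM}).
Hypothesis c12 : c1 != c2.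
Hypothesis c13 : c1 != c3.
Hypothesis c23 : c2 != c3.
Definition C3 := [set c1; c2; c3].
Hypothesis F1 : forall x y (Y W : {set EM}), x != y -> x \in C3 -> y \in C3 ->
  Q (cs Y x :|: cs W y) <= rkM Y + rkM W + z.
Hypothesis F2 : forall x y (Y W : {set EM}), x != y -> x \in C3 -> y \in C3 ->
  rkM Y + rkM W + z <= Q (cs Y x :|: cs W y).
Hypothesis F1s : forall x (Y : {set EM}), x \in C3 -> Q (cs Y x) <= rkM Y + z.
Hypothesis F2s : forall x (Y : {set EM}), x \in C3 -> rkM Y + z <= Q (cs Y x).
Hypothesis RC : forall e x y w (S : {set EM * EN}), [set x; y; w] = C3 ->
  (e, x) \in S -> (e, y) \in S -> Q ((e, w) |: S) <= Q S.
Hypothesis rkMle : forall X, rkM X <= r.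
Hypothesis ra : rkM a = m.
Hypothesis rb : rkM b = m.
Hypothesis rab : rkM (a :|: b) = h.
Hypothesis rac : rkM (a :|: c) = h.
Hypothesis rbc : rkM (b :|: c) = h.
Hypothesis rad : rkM (a :|: d) = h.
Hypothesis rbd : rkM (b :|: d) = h.
Hypothesis rabc : rkM (a :|: b :|: c) = r.
Hypothesis rabd : rkM (a :|: b :|: d) = r.
Hypothesis rcd : rkM (c :|: d) = r.
Hypothesis rT : rkM setT = r.
Hypothesis ineq : 5 * h < 3 * r + 2 * m.

Lemma inC1 : c1 \in C3. Proof. by rewrite !inE eqxx. Qed.
Lemma inC2 : c2 \in C3. Proof. by rewrite !inE eqxx orbT. Qed.
Lemma inC3 : c3 \in C3. Proof. by rewrite !inE eqxx !orbT. Qed.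

Lemma csE (Y : {set EM}) (f : EN) (p : EM * EN) : (p \in cs Y f) = (p.1 \in Y) && (p.2 == f).
Proof. by rewrite inE. Qed.



Ltac subt := apply/subsetP => -[e0 f0]; rewrite !inE /=;
  repeat match goal with |- context [?x \in ?A] => case: (x \in A) end;
  repeat match goal with |- context [?x == ?y] => case: (x == y) end; done.

Lemma cs_add e (Y : {set EM}) : (e, c3) |: cs Y c3 = cs (e |: Y) c3.
Proof.
apply/setP => -[e0 f0]; rewrite !inE /= xpair_eqE.
by case: (e0 == e); case: (f0 == c3); case: (e0 \in Y).
Qed.

Lemma K3 : False.
Proof.
pose K := cs a c1 :|: cs b c2.
pose G := fun Y => Q (K :|: cs Y c3).
have P123 : [set c1; c2; c3] = C3 by [].
have P231 : [set c2; c3; c1] = C3.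
  by apply/setP=> q; rewrite !inE; do 3 case: (q == _).
have P132 : [set c1; c3; c2] = C3.
  by apply/setP=> q; rewrite !inE; do 3 case: (q == _).
have s1 : forall u, rkM (a :|: u) = h -> G (a :|: u) <= 2 * h + z.
  move=> u hu.
  pose S1 := (cs a c1 :|: cs (a :|: u) c3) :|: cs a c2.
  pose S2 := cs a c1 :|: cs (a :|: b) c2.
  have q1 : Q S1 <= m + h + z.
    apply: leq_trans (g_closureS Qmono Qsub _) _.
      move=> p; rewrite csE => /andP[pa /eqP p2].
      case: p pa p2 => e f /= pa ->.
      apply: (RC P132); rewrite !inE /= ?pa ?eqxx //= ?orbT //.
    by rewrite -ra -hu F1 // ?inC1 ?inC3.
  have q2 : Q S2 <= m + h + z by rewrite -ra -rab F1 // ?inC1 ?inC2.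
  have q3 : 2 * m + z <= Q (cs a c1 :|: cs a c2).
    have := F2 a a c12 inC1 inC2; rewrite ra; lia.
  have := g_submodI Qmono Qsub (X := S1) (Y := S2) (U := K :|: cs (a :|: u) c3)
     (I := cs a c1 :|: cs a c2).
  have -> : K :|: cs (a :|: u) c3 \subset S1 :|: S2.
    apply/subsetP=> p; rewrite !inE; case: p => e f /=.
    by case: (e \in a); case: (e \in b); case: (e \in u); case: (f == _); case: (f == _); case: (f == _).
  have -> : cs a c1 :|: cs a c2 \subset S1 :&: S2.
    apply/subsetP=> p; rewrite !inE; case: p => e f /=.
    by case: (e \in a); case: (e \in b); case: (e \in u); case: (f == _); case: (f == _); case: (f == _).
  move=> /(_ isT isT); rewrite /G; lia.
have s2 : forall u, rkM (b :|: u) = h -> G (b :|: u) <= 2 * h + z.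
  move=> u hu.
  pose S1 := (cs b c2 :|: cs (b :|: u) c3) :|: cs b c1.
  pose S2 := cs (a :|: b) c1 :|: cs b c2.
  have q1 : Q S1 <= m + h + z.
    apply: leq_trans (g_closureS Qmono Qsub _) _.
      move=> p; rewrite csE => /andP[pa /eqP p2].
      case: p pa p2 => e f /= pa ->.
      apply: (RC P231); rewrite !inE /= ?pa ?eqxx //= ?orbT //.
    by rewrite -rb -hu F1 // ?inC2 ?inC3.
  have q2 : Q S2 <= m + h + z.
    have := F1 (a :|: b) b c12 inC1 inC2; rewrite rab rb /S2; lia.
  have q3 : 2 * m + z <= Q (cs b c1 :|: cs b c2).
    have := F2 b b c12 inC1 inC2; rewrite rb; lia.
  have := g_submodI Qmono Qsub (X := S1) (Y := S2) (U := K :|: cs (b :|: u) c3)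
     (I := cs b c1 :|: cs b c2).
  have -> : K :|: cs (b :|: u) c3 \subset S1 :|: S2 by subt.
  have -> : cs b c1 :|: cs b c2 \subset S1 :&: S2 by subt.
  move=> /(_ isT isT); rewrite /G; lia.
have s5 : forall u, rkM (a :|: b :|: u) = r -> h + r + z <= G (a :|: b :|: u).
  move=> u hu.
  pose S := K :|: cs (a :|: b :|: u) c3.
  have cl : Q (S :|: (cs a c2 :|: cs b c1)) <= Q S.
    apply: (g_closureS Qmono Qsub) => p; rewrite inE !csE => /orP[] /andP[pa /eqP p2];
      case: p pa p2 => e f /= pa ->.
      by apply: (RC P132); rewrite !inE /= ?pa ?eqxx //= ?orbT.
    by apply: (RC P231); rewrite !inE /= ?pa ?eqxx //= ?orbT.
  apply: leq_trans cl.
  apply: leq_trans (Qmono (X := cs (a :|: b) c1 :|: cs (a :|: b :|: u) c3) _); last by subt.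
  by rewrite -rab -hu F2 // ?inC1 ?inC3.
have s7 : h + r + z <= G (c :|: d).
  pose S := K :|: cs (c :|: d) c3.
  have cl1 : Q (S :|: cs setT c3) <= Q S.
    apply: (g_closure Qmono Qsub) => p; rewrite csE => /andP[_ /eqP p2].
    case: p p2 => e f /= ->.
    exists (cs (c :|: d) c3); first by subt.
    rewrite cs_add; apply: leq_trans (F1s _ inC3) _.
    apply: leq_trans (F2s _ inC3); rewrite rcd leq_add2r; exact: rkMle.
  have cl2 : Q ((S :|: cs setT c3) :|: (cs a c2 :|: cs b c1)) <= Q (S :|: cs setT c3).
    apply: (g_closureS Qmono Qsub) => p; rewrite inE !csE => /orP[] /andP[pa /eqP p2];
      case: p pa p2 => e f /= pa ->.
      by apply: (RC P132); rewrite !inE /= ?pa ?eqxx //= ?orbT.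
    by apply: (RC P231); rewrite !inE /= ?pa ?eqxx //= ?orbT.
  apply: leq_trans cl1; apply: leq_trans cl2.
  apply: leq_trans (Qmono (X := cs (a :|: b) c1 :|: cs setT c3) _); last by subt.
  by rewrite -rab -rT F2 // ?inC1 ?inC3.
have s8 : 2 * m + z <= Q K.
  have := F2 a b c12 inC1 inC2; rewrite ra rb /K; lia.
have t1 : forall u, G (a :|: b :|: u) + G u <= G (a :|: u) + G (b :|: u).
  move=> u; apply: (g_submodI Qmono Qsub); subt.
have t3 : G (c :|: d) + Q K <= G c + G d.
  apply: (g_submodI Qmono Qsub); subt.
have := s1 _ rac; have := s1 _ rad; have := s2 _ rbc; have := s2 _ rbd.
have := s5 _ rabc; have := s5 _ rabd; have := t1 c; have := t1 d.
lia.
Qed.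
End Key.

Section Paving.
Variable T : finType.
Variable Hs : seq {set T}.
Variable r : nat.
Hypothesis hr : 2 <= r.
Hypothesis hint : forall H H' : {set T}, H \in Hs -> H' \in Hs -> H != H' -> #|H :&: H'| <= r - 2.
Implicit Types X Y : {set T}.
Definition pf (X : {set T}) :=
  if has (fun H : {set T} => X \subset H) Hs then minn #|X| (r - 1) else minn #|X| r.

Lemma pf_card X : pf X <= #|X|.
Proof. rewrite /pf; case: ifP => _; exact: geq_minl. Qed.
Lemma pf_le X : pf X <= r.
Proof. rewrite /pf; case: ifP => _; lia. Qed.

Lemma pf_mono X Y : X \subset Y -> pf X <= pf Y.
Proof.
move=> hXY; rewrite /pf.
have hc := subset_leq_card hXY.
case: ifP => hX; case: ifP => hY; try lia.
move: hY => /hasP [H HH hYH].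
suff : has (fun H : {set T} => X \subset H) Hs by rewrite hX.
by apply/hasP; exists H => //; apply: subset_trans hYH.
Qed.

Lemma pf_small X : pf X < r -> pf X < #|X| -> has (fun H : {set T} => X \subset H) Hs /\ pf X = r - 1.
Proof. rewrite /pf; case: ifP => h h1 h2; [split => //; lia | lia]. Qed.

Lemma pf_sub_aux X Y : pf X < r -> pf Y < r -> pf X < #|X| ->
  pf (X :|: Y) + pf (X :&: Y) <= pf X + pf Y.
Proof.
move=> hX hY /(pf_small hX) [hPX eX].
have hU := pf_le (X :|: Y).
have cUI := cardsUI X Y.
case: (ltnP (pf Y) #|Y|) => hYs.
  have [hPY eY] := pf_small hY hYs.
  move: hPX hPY => /hasP [H HH XH] /hasP [H' HH' YH'].
  case: (eqVneq H H') => [eHH|nHH].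
    have : pf (X :|: Y) <= r - 1.
      rewrite /pf; have -> : has (fun H : {set T} => X :|: Y \subset H) Hs.
        by apply/hasP; exists H => //; rewrite subUset XH eHH YH'.
      lia.
    have := pf_mono (subsetIl X Y); lia.
  have := hint HH HH' nHH.
  have : X :&: Y \subset H :&: H' by apply: setISS.
  move=> /subset_leq_card; have := pf_card (X :&: Y); lia.
have eY : pf Y = #|Y| by have := pf_card Y; lia.
case: (boolP (Y \subset X)) => hYX.
  have -> : X :|: Y = X by apply/setUidPl.
  have -> : X :&: Y = Y by apply/setIidPr.
  done.
have : #|X :&: Y| < #|Y|.
  apply: proper_card; rewrite properEneq subsetIr andbT.
  apply/negP => /eqP e; move: hYX; rewrite -e; by rewrite subsetIl.
have := pf_card (X :&: Y); lia.
Qed.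

Lemma pf_submod X Y : pf (X :|: Y) + pf (X :&: Y) <= pf X + pf Y.
Proof.
have hU := pf_le (X :|: Y).
case: (ltnP (pf X) r) => hX; last first.
  have := pf_mono (subsetIr X Y); lia.
case: (ltnP (pf Y) r) => hY; last first.
  have := pf_mono (subsetIl X Y); lia.
case: (ltnP (pf X) #|X|) => hXs; first exact: pf_sub_aux.
case: (ltnP (pf Y) #|Y|) => hYs.
  rewrite setUC setIC addnC; have := pf_sub_aux hY hX hYs; lia.
have := pf_card (X :|: Y); have := pf_card (X :&: Y); have := cardsUI X Y.
have := pf_card X; have := pf_card Y.
lia.
Qed.

Lemma pf_matroid : is_matroid pf.
Proof. split; [exact: pf_card | exact: pf_mono | exact: pf_submod]. Qed.
End Paving.

Section Lind.
Variable r : nat.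
Hypothesis hr : 4 <= r.
Local Notation E := (lindstrom_E r).

Definition ps (s : seq nat) : {set E} := [set x : E | nat_of_ord x.1 \in s].

Lemma psE s (x : E) : (x \in ps s) = (nat_of_ord x.1 \in s). Proof. by rewrite inE. Qed.

Lemma ps_cat s t : ps s :|: ps t = ps (s ++ t).
Proof. by apply/setP => x; rewrite !inE mem_cat. Qed.

Lemma ps_cap s t : ps s :&: ps t = ps (filter (mem t) s).
Proof. by apply/setP => x; rewrite !inE mem_filter andbC. Qed.

Lemma r2pos : 0 < r - 2. Proof. lia. Qed.

Lemma ps1_card_le i : #|ps [:: i]| <= r - 2.
Proof.
case: (ltnP i 4) => hi.
  have -> : ps [:: i] = setX [set Ordinal hi] [set: 'I_(r - 2)].
    apply/setP => x; rewrite !inE andbT; by rewrite -val_eqE.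
  by rewrite cardsX cards1 cardsT card_ord mul1n.
have -> : ps [:: i] = set0.
  apply/setP => x; rewrite !inE; apply/negP => /eqP e.
  have := ltn_ord x.1; lia.
by rewrite cards0.
Qed.

Lemma ps1_card i : i < 4 -> #|ps [:: i]| = r - 2.
Proof.
move=> hi.
have -> : ps [:: i] = setX [set Ordinal hi] [set: 'I_(r - 2)].
  apply/setP => x; rewrite !inE andbT; by rewrite -val_eqE.
by rewrite cardsX cards1 cardsT card_ord mul1n.
Qed.

Lemma ps_cons i s : ps (i :: s) = ps [:: i] :|: ps s.
Proof. by rewrite ps_cat. Qed.

Lemma ps_card_le s : #|ps s| <= size s * (r - 2).
Proof.
elim: s => [|i s IH]; first by rewrite (_ : ps [::] = set0) ?cards0 //; apply/setP => x; rewrite !inE.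
rewrite ps_cons; apply: leq_trans (leq_card_setU _ _) _.
by rewrite /= mulSn; apply: leq_add => //; exact: ps1_card_le.
Qed.

Lemma ps_card s : uniq s -> all (fun i => i < 4) s -> #|ps s| = size s * (r - 2).
Proof.
elim: s => [|i s IH]; first by rewrite (_ : ps [::] = set0) ?cards0 //; apply/setP => x; rewrite !inE.
move=> /= /andP [nis us] /andP [hi hs].
rewrite ps_cons cardsU IH // ps1_card //.
have -> : ps [:: i] :&: ps s = set0.
  apply/setP => x; rewrite !inE; apply/negP => /andP [/eqP e]; rewrite e.
  by apply/negP.
by rewrite cards0 subn0 /= mulSn.
Qed.

Lemma ps_sub s t : all (fun i => i < 4) s -> (ps s \subset ps t) = all (mem t) s.
Proof.
move=> hs; apply/subsetP/allP.
  move=> h i hi; have hi4 : i < 4 by apply: (allP hs).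
  have := h (Ordinal hi4, Ordinal r2pos); rewrite !inE /=; exact.
move=> h x; rewrite !inE => /h; exact.
Qed.

Definition hv : seq (nat * nat) := [:: (0,1);(0,2);(0,3);(1,2);(1,3)].

Lemma part_ps p : lindstrom_part r p = ps [:: val p.1; val p.2].
Proof. by apply/setP => x; rewrite !inE -!val_eqE. Qed.

Lemma hyps_vals : [seq (val p.1, val p.2) | p <- lindstrom_hyps] = hv.
Proof. by rewrite /lindstrom_hyps /= !inordK. Qed.

Definition lHs : seq {set E} := [seq ps [:: q.1; q.2] | q <- hv].

Lemma lhas (X : {set E}) : has (fun p => X \subset lindstrom_part r p) lindstrom_hyps
   = has (fun H : {set E} => X \subset H) lHs.
Proof.
rewrite /lHs -hyps_vals -map_comp has_map; apply: eq_has => p /=.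
by rewrite part_ps.
Qed.

Lemma lrk_pf (X : {set E}) : lindstrom_rk X = pf lHs r X.
Proof. by rewrite /lindstrom_rk /pf lhas. Qed.

Lemma lHs_int H H' : H \in lHs -> H' \in lHs -> H != H' -> #|H :&: H'| <= r - 2.
Proof.
move=> /mapP [q hq ->] /mapP [q' hq' ->] nH.
have nq : q != q' by apply: contraNneq nH => ->.
rewrite ps_cap; apply: leq_trans (ps_card_le _) _.
suff h : size (filter (mem [:: q'.1; q'.2]) [:: q.1; q.2]) <= 1.
  by rewrite -{2}(mul1n (r - 2)) leq_mul2r h orbT.
have chk : all (fun q => all (fun q' => (q == q') || (size (filter (mem [:: q'.1; q'.2]) [:: q.1; q.2]) <= 1)) hv) hv by [].
have := allP (allP chk q hq) q' hq'; by rewrite (negbTE nq).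
Qed.

Lemma lind_matroid : is_matroid (@lindstrom_rk r).
Proof.
have hr2 : 2 <= r by lia.
have [h1 h2 h3] := pf_matroid hr2 lHs_int.
split => [X|X Y hXY|X Y]; rewrite !lrk_pf; auto.
Qed.

Lemma lrk_le X : @lindstrom_rk r X <= r.
Proof. rewrite lrk_pf /pf; case: ifP => _; lia. Qed.

Lemma lrk1 e : @lindstrom_rk r [set e] = 1.
Proof. rewrite lrk_pf /pf cards1; case: ifP => _; lia. Qed.

Lemma lrk_ps s : uniq s -> all (fun i => i < 4) s ->
  @lindstrom_rk r (ps s) = if has (fun q : nat * nat => all (mem [:: q.1; q.2]) s) hv
     then minn (size s * (r - 2)) (r - 1) else minn (size s * (r - 2)) r.
Proof.
move=> us hs; rewrite lrk_pf /pf ps_card // /lHs has_map.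
by rewrite (@eq_has _ _ (fun q : nat * nat => all (mem [:: q.1; q.2]) s)) // => q /=; rewrite ps_sub.
Qed.

Lemma psT : ps [:: 0; 1; 2; 3] = [set: E].
Proof.
apply/setP => x; rewrite !inE.
by case: x => [[[|[|[|[|n]]]] hn] y] //=.
Qed.

Lemma lrkT : @lindstrom_rk r [set: E] = r.
Proof. rewrite -psT lrk_ps //=; lia. Qed.
End Lind.

Section NSide.
Variables (EN : finType) (rkN : {set EN} -> nat).
Hypothesis hN : is_matroid rkN.
Implicit Types X Y C T : {set EN}.

Lemma nmono X Y : X \subset Y -> rkN X <= rkN Y. Proof. by case: hN => _ H _; apply: H. Qed.
Lemma ncard X : rkN X <= #|X|. Proof. by case: hN. Qed.
Lemma nsub X Y : rkN (X :|: Y) + rkN (X :&: Y) <= rkN X + rkN Y. Proof. by case: hN. Qed.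

Lemma pair_sym (e f : EN) : [set e; f] = [set f; e].
Proof. by apply/setP => x; rewrite !inE orbC. Qed.

Lemma parallel_sym e f : parallel rkN e f = parallel rkN f e.
Proof.
rewrite /parallel pair_sym eq_sym.
by case: (f != e); case: (is_loop rkN e); case: (is_loop rkN f).
Qed.

Lemma nonloop1 e : ~~ is_loop rkN e -> rkN [set e] = 1.
Proof. rewrite /is_loop => h; have := ncard [set e]; rewrite cards1; lia. Qed.

Lemma parallel_trans e f g : parallel rkN e f -> parallel rkN f g -> e != g -> parallel rkN e g.
Proof.
move=> /and4P [nef le lf ref] /and4P [nfg _ lg rfg] neg.
apply/and4P; split => //.
have h1 := nonloop1 le.
have h2 := nonloop1 lf.
have hm : rkN [set e; g] + rkN [set f] <= rkN [set e; f] + rkN [set f; g].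
  apply: (g_submodI nmono nsub).
    by apply/subsetP => x; rewrite !inE => /orP [] ->; rewrite ?orbT.
  by apply/subsetP => x; rewrite !inE => /eqP ->; rewrite eqxx !orbT.
have : rkN [set e] <= rkN [set e; g] by apply: nmono; rewrite sub1set !inE eqxx.
move: ref rfg => /eqP ref /eqP rfg hle; apply/eqP; lia.
Qed.

Definition T0 := [set e | ~~ is_loop rkN e & [forall f, parallel rkN e f ==> (enum_rank e < enum_rank f)]].

Lemma T0_simpl : simplification_set rkN T0.
Proof.
split.
- by move=> e; rewrite inE => /andP [].
- move=> e f; rewrite !inE => /andP [_ /forallP he] /andP [_ /forallP hf].
  apply/negP => pef.
  have := implyP (he f) pef; have := implyP (hf e); rewrite parallel_sym => /(_ pef).
  lia.
- move=> e le eT.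
  have ecls : (e == e) || parallel rkN e e by rewrite eqxx.
  case: (@arg_minnP _ e (fun g => (g == e) || parallel rkN e g) (fun g => nat_of_ord (enum_rank g)) ecls) => g /= gcls gmin.
  have gT : g \in T0.
    rewrite inE; apply/andP; split.
      move: gcls => /orP [/eqP -> //|/and4P [_ _ ->] //].
    apply/forallP => f; apply/implyP => pgf.
    have fcls : (f == e) || parallel rkN e f.
      move: gcls => /orP [/eqP eg|peg].
        by rewrite eg in pgf; rewrite pgf orbT.
      case: (eqVneq f e) => [fe|nfe] //=.
      by apply: (parallel_trans peg pgf); rewrite eq_sym.
    have := gmin f fcls.
    have : enum_rank g != enum_rank f.
      apply/negP => /eqP /enum_rank_inj egf; move: pgf; by rewrite egf /parallel eqxx.
    rewrite -val_eqE /=; lia.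
  exists g => //.
  move: gcls => /orP [/eqP eg|//].
  by move: eT; rewrite -eg gT.
Qed.

Lemma exists_simpl : exists T, simplification_set rkN T.
Proof. exists T0; exact: T0_simpl. Qed.

Lemma circuit_exists T X : simplification_set rkN T -> X \subset T -> rkN X < #|X| ->
  exists C, [/\ C \subset T, 2 < #|C|, rkN C < #|C| &
    forall x, x \in C -> rkN (C :\ x) = #|C| - 1].
Proof.
move=> [Tnl Tnp _] XT hX.
pose P := fun n => [exists C : {set EN}, [&& C \subset X, rkN C < #|C| & #|C| == n]].
have exP : exists n, P n.
  by exists #|X|; apply/existsP; exists X; rewrite subxx hX eqxx.
case: (ex_minnP exP) => n /existsP [C /and3P [CX hC /eqP nC]] hmin.
have minC : forall C', C' \subset X -> #|C'| < #|C| -> rkN C' = #|C'|.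
  move=> C' C'X hc'; apply/eqP; rewrite eqn_leq ncard /= leqNgt; apply/negP => hlt.
  have : P #|C'| by apply/existsP; exists C'; rewrite C'X hlt eqxx.
  move/hmin; lia.
have CT : C \subset T by apply: subset_trans CX XT.
have hdel : forall x, x \in C -> rkN (C :\ x) = #|C| - 1.
  move=> x xC; have hc := cardsD1 x C; rewrite xC in hc.
  rewrite minC; [lia | | lia].
  by apply: subset_trans (subsetDl _ _) CX.
exists C; split => //.
have [c1 c1C] : exists c1, c1 \in C.
  by apply/card_gt0P; lia.
have nl1 : ~~ is_loop rkN c1 by apply: Tnl; apply: (subsetP CT).
have hc := cardsD1 c1 C; rewrite c1C in hc.
rewrite ltnNge; apply/negP => hle.
case: (posnP #|C :\ c1|) => h0.
  have : C = [set c1].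
    apply/setP => x; rewrite inE; case: (eqVneq x c1) => [->|nx]; first by rewrite c1C ?eqxx.
    apply/negP => xC.
    have : x \in C :\ c1 by rewrite !inE nx xC.
    by move/eqP: h0; rewrite cards_eq0 => /eqP ->; rewrite inE.
  move=> eC; move: hC; rewrite eC nonloop1 // cards1.
  done.
have h1 : #|C :\ c1| = 1 by lia.
have [c2 e2] : exists c2, C :\ c1 = [set c2] by apply/cards1P; rewrite h1.
have c2D : c2 \in C :\ c1 by rewrite e2 inE.
have c2C : c2 \in C by move: c2D; rewrite !inE => /andP [].
have n12 : c2 != c1 by move: c2D; rewrite !inE => /andP [].
have eC : C = [set c1; c2].
  apply/setP => x; rewrite !inE; case: (eqVneq x c1) => [->|nx]; first by rewrite c1C ?eqxx.
  have : (x \in C :\ c1) = (x == c2) by rewrite e2 inE.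
  by rewrite !inE nx.
have np := Tnp c1 c2 (subsetP CT _ c1C) (subsetP CT _ c2C).
have nl2 : ~~ is_loop rkN c2 by apply: Tnl; apply: (subsetP CT).
have : rkN [set c1] <= rkN C by apply: nmono; rewrite sub1set.
rewrite nonloop1 // => hge.
move: np; rewrite /parallel eq_sym n12 nl1 nl2 /=.
move: hC; rewrite eC cards2 eq_sym n12 /= => hC2.
move: hge; rewrite eC => hge.
have -> : rkN [set c1; c2] = 1 by lia.
done.
Qed.
End NSide.

Section Tens.
Variables (EM EN : finType) (rkM : {set EM} -> nat) (rkN : {set EN} -> nat)
  (rkP : {set EM * EN} -> nat).
Hypothesis hN : is_matroid rkN.
Hypothesis hP : tensor_product rkM rkN rkP.
Hypothesis Mnl : forall e, ~~ is_loop rkM e.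
Implicit Types (S : {set EN}) (Y W : {set EM}) (U V : {set EM * EN}) (f x : EN) (e : EM).

Lemma hPm : is_matroid rkP. Proof. by case: hP => [[]]. Qed.
Lemma pmono U V : U \subset V -> rkP U <= rkP V. Proof. by case: hPm => _ H _; apply: H. Qed.
Lemma psub U V : rkP (U :|: V) + rkP (U :&: V) <= rkP U + rkP V. Proof. by case: hPm. Qed.

Definition rs e S : {set EM * EN} := [set p | (p.1 == e) && (p.2 \in S)].
Definition colset S : {set EM * EN} := [set p | p.2 \in S].

Lemma rs_img e S : [set (e, x) | x in S] = rs e S.
Proof.
apply/setP => -[e0 f0]; rewrite inE /=; apply/imsetP/andP => [[x hx [-> ->]]|[/eqP -> h]].
  by rewrite eqxx.
by exists f0.
Qed.

Lemma cs_img Y f : [set (x, f) | x in Y] = cs Y f.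
Proof.
apply/setP => -[e0 f0]; rewrite inE /=; apply/imsetP/andP => [[x hx [-> ->]]|[h /eqP ->]].
  by rewrite eqxx.
by exists e0.
Qed.

Lemma csT_img f : [set (x, f) | x : EM] = cs setT f.
Proof.
apply/setP => -[e0 f0]; rewrite inE /=; apply/imsetP/andP => [[x hx [-> ->]]|[h /eqP ->]].
  by rewrite eqxx inE.
by exists e0.
Qed.

Lemma rkP_rs e S : rkP (rs e S) = rkN S.
Proof. by case: hP => [[_ hr _ _ _] _]; rewrite -rs_img hr. Qed.

Lemma rkP_cs f Y : ~~ is_loop rkN f -> rkP (cs Y f) = rkM Y.
Proof. by case: hP => [[_ _ hc _ _] _] hf; rewrite -cs_img hc. Qed.

Lemma rkP_csT_le f : rkP (cs setT f) <= rkM setT.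
Proof.
case: (boolP (is_loop rkN f)) => hf.
  by case: hP => [[_ _ _ _ hl] _]; rewrite -csT_img hl.
by rewrite rkP_cs.
Qed.

Lemma colset_step S x : rkP (colset (x |: S)) + rkM setT * rkN S
   <= rkP (colset S) + rkM setT * rkN (x |: S).
Proof.
have e : colset (x |: S) = colset S :|: cs setT x.
  apply/setP => -[e0 f0]; rewrite !inE /=; by case: (f0 == x); case: (f0 \in S).
have mN : rkN S <= rkN (x |: S) by apply: (nmono hN); apply: subsetUr.
case: (leqP (rkN (x |: S)) (rkN S)) => h.
  have : rkP (colset (x |: S)) <= rkP (colset S).
    rewrite e; apply: (g_closure pmono psub) => p; rewrite csE => /andP [_ /eqP p2].
    case: p p2 => e0 f0 /= ->.
    exists (rs e0 S).
      by apply/subsetP => -[e1 f1]; rewrite !inE => /andP [].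
    have -> : (e0, x) |: rs e0 S = rs e0 (x |: S).
      apply/setP => -[e1 f1]; rewrite !inE /= xpair_eqE.
      by case: (e1 == e0); case: (f1 == x).
    by rewrite !rkP_rs.
  have -> : rkN (x |: S) = rkN S by lia.
  lia.
have := g_subadd psub (colset S) (cs setT x); rewrite -e => h1.
have := rkP_csT_le x => h2.
have : rkM setT * (rkN S).+1 <= rkM setT * rkN (x |: S) by rewrite leq_mul2l h orbT.
rewrite mulnS; lia.
Qed.

Lemma colset_ineq S S' : S \subset S' ->
  rkP (colset S') + rkM setT * rkN S <= rkP (colset S) + rkM setT * rkN S'.
Proof.
move: {2}#|S' :\: S| (leqnn #|S' :\: S|) => n; elim: n S => [|n IH] S hn hSS'.
  have -> : S' = S.
    apply/eqP; rewrite eqEsubset hSS' andbT.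
    by move: hn; rewrite leqn0 cards_eq0 setD_eq0.
  lia.
case: (set_0Vmem (S' :\: S)) => [e0|[x hx]].
  have -> : S' = S by apply/eqP; rewrite eqEsubset hSS' andbT -setD_eq0 e0.
  lia.
have xS' : x \in S' by move: hx; rewrite inE => /andP [].
have xS : x \notin S by move: hx; rewrite inE => /andP [].
have h1 : x |: S \subset S' by rewrite subUset sub1set xS' hSS'.
have h2 : #|S' :\: (x |: S)| <= n.
  have : S' :\: (x |: S) = (S' :\: S) :\ x.
    by apply/setP => y; rewrite !inE; case: (y == x); case: (y \in S).
  move=> ->; have := cardsD1 x (S' :\: S); rewrite hx; lia.
have := IH _ h2 h1; have := colset_step S x; lia.
Qed.

Lemma colsetT : colset setT = setT.
Proof. by apply/setP => p; rewrite !inE. Qed.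

Lemma tensor_lower S : rkM setT * rkN S <= rkP (colset S).
Proof.
have := colset_ineq (subsetT S); rewrite colsetT.
by case: hP => _ ->; lia.
Qed.

Lemma rkP0 : rkP set0 = 0.
Proof. case: hPm => hc _ _; have := hc set0; rewrite cards0; lia. Qed.

Lemma colset_upper S : rkP (colset S) <= rkM setT * #|S|.
Proof.
move: {2}#|S| (leqnn #|S|) => n; elim: n S => [|n IH] S hn.
  have -> : S = set0 by apply/eqP; rewrite -cards_eq0; lia.
  have -> : colset set0 = set0 by apply/setP => p; rewrite !inE.
  by rewrite rkP0.
case: (set_0Vmem S) => [->|[x xS]].
  have -> : colset set0 = set0 by apply/setP => p; rewrite !inE.
  by rewrite rkP0.
have e : colset S = colset (S :\ x) :|: cs setT x.
  apply/setP => -[e0 f0]; rewrite !inE /=.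
  case: (eqVneq f0 x) => [->|]; first by rewrite xS.
  by move=> _ /=; rewrite orbF.
have hc := cardsD1 x S; rewrite xS in hc.
have := IH (S :\ x) ltac:(lia).
have := g_subadd psub (colset (S :\ x)) (cs setT x); rewrite -e.
have := rkP_csT_le x.
rewrite hc add1n mulnS; lia.
Qed.
End Tens.

Lemma arith5 (rY rW Z G A B K r : nat) : K + r * 2 <= A -> Z <= K -> A + rY <= B + r ->
  B + rW <= G + r -> rY + rW + Z <= G.
Proof. lia. Qed.

Lemma lt_pred (a b : nat) : a < b -> a <= b - 1.
Proof. lia. Qed.

Section Circ.
Variables (EM EN : finType) (rkM : {set EM} -> nat) (rkN : {set EN} -> nat)
  (rkP : {set EM * EN} -> nat).
Hypothesis hN : is_matroid rkN.
Hypothesis hP : tensor_product rkM rkN rkP.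
Hypothesis Mnl : forall e, ~~ is_loop rkM e.
Variables (C : {set EN}) (c1 c2 c3 : EN).
Hypothesis Cnl : forall x, x \in C -> ~~ is_loop rkN x.
Hypothesis hCd : rkN C < #|C|.
Hypothesis hdel : forall x, x \in C -> rkN (C :\ x) = #|C| - 1.
Hypothesis c1C : c1 \in C.
Hypothesis c2C : c2 \in C.
Hypothesis c3C : c3 \in C.
Hypothesis c12 : c1 != c2.
Hypothesis c13 : c1 != c3.
Hypothesis c23 : c2 != c3.
Implicit Types (S : {set EN}) (Y W : {set EM}) (U V : {set EM * EN}) (f x y w : EN) (e : EM).

Let CC := C3 c1 c2 c3.
Definition Zp := C :\: C3 c1 c2 c3.
Definition Zs := colset EM Zp.
Definition Q U := rkP (U :|: Zs).
Definition zz := rkP Zs.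

Let pm := pmono hP.
Let ps := psub hP.

Lemma Qmono U V : U \subset V -> Q U <= Q V.
Proof. by move=> h; apply: pm; apply: setSU. Qed.

Lemma Qsub U V : Q (U :|: V) + Q (U :&: V) <= Q U + Q V.
Proof.
apply: (g_submodI pm ps).
  by apply/subsetP => p; rewrite !(in_setU, in_setI); case: (p \in U); case: (p \in V); case: (p \in Zs).
by apply/subsetP => p; rewrite !(in_setU, in_setI); case: (p \in U); case: (p \in V); case: (p \in Zs).
Qed.

Lemma CC_card : #|CC| = 3.
Proof.
have -> : CC = c1 |: [set c2; c3].
  by apply/setP => q; rewrite /CC /C3 !inE orbA.
by rewrite cardsU1 cards2 c23 !inE negb_or c12 c13.
Qed.

Lemma CC_sub : CC \subset C.
Proof. by apply/subsetP => q; rewrite !inE => /orP [/orP [] | ] /eqP ->. Qed.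

Lemma distinct3 x y w : [set x; y; w] = CC -> [&& x != y, x != w & y != w].
Proof.
move=> e; have := CC_card; rewrite -e.
case: (eqVneq x y) => [->|nxy] /=.
  have -> : [set y; y; w] = [set y; w] by apply/setP => q; rewrite !inE; case: (q == y); case: (q == w).
  move=> h; have := cards2 y w; rewrite h; by case: (y != w).
case: (eqVneq x w) => [->|nxw] /=.
  have -> : [set w; y; w] = [set w; y] by apply/setP => q; rewrite !inE; case: (q == y); case: (q == w).
  move=> h; have := cards2 w y; rewrite h; by case: (w != y).
case: (eqVneq y w) => [->|nyw] //=.
have -> : [set x; w; w] = [set x; w] by apply/setP => q; rewrite !inE; case: (q == x); case: (q == w).
move=> h; have := cards2 x w; rewrite h; by case: (x != w).
Qed.

Lemma in3 x y w : [set x; y; w] = CC -> [/\ x \in C, y \in C & w \in C].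
Proof.
move=> e; have := CC_sub; rewrite -e => /subsetP h.
by split; apply: h; rewrite !inE eqxx ?orbT.
Qed.

Lemma third x y : x \in CC -> y \in CC -> x != y -> exists w, [set x; y; w] = CC.
Proof.
rewrite /CC /C3 !inE => /orP [/orP [] | ] /eqP -> /orP [/orP [] | ] /eqP -> //; rewrite ?eqxx // => _.
- exists c3; apply/setP => q; rewrite !inE; by case: (q == c1); case: (q == c2); case: (q == c3).
- exists c2; apply/setP => q; rewrite !inE; by case: (q == c1); case: (q == c2); case: (q == c3).
- exists c3; apply/setP => q; rewrite !inE; by case: (q == c1); case: (q == c2).
- exists c1; apply/setP => q; rewrite !inE; by case: (q == c1); case: (q == c2); case: (q == c3).
- exists c2; apply/setP => q; rewrite !inE; by case: (q == c1); case: (q == c2); case: (q == c3).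
- exists c1; apply/setP => q; rewrite !inE; by case: (q == c1); case: (q == c2); case: (q == c3).
Qed.

Lemma Zp_card : #|Zp| + 3 = #|C|.
Proof.
rewrite /Zp cardsD.
have -> : C :&: C3 c1 c2 c3 = CC by apply/setIidPr; exact: CC_sub.
rewrite CC_card; have := subset_leq_card CC_sub; rewrite CC_card; lia.
Qed.

Lemma F1 x y Y W : x != y -> x \in CC -> y \in CC -> Q (cs Y x :|: cs W y) <= rkM Y + rkM W + zz.
Proof.
move=> nxy hx hy.
have nx : ~~ is_loop rkN x by apply: Cnl; apply: (subsetP CC_sub).
have ny : ~~ is_loop rkN y by apply: Cnl; apply: (subsetP CC_sub).
rewrite /Q /zz.
have := g_subadd ps (cs Y x :|: cs W y) Zs.
have := g_subadd ps (cs Y x) (cs W y).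
rewrite !(rkP_cs hP) //; lia.
Qed.

Lemma F1s x Y : x \in CC -> Q (cs Y x) <= rkM Y + zz.
Proof.
move=> hx.
have nx : ~~ is_loop rkN x by apply: Cnl; apply: (subsetP CC_sub).
rewrite /Q /zz.
have := g_subadd ps (cs Y x) Zs.
rewrite !(rkP_cs hP) //; lia.
Qed.

Lemma swap V U f Y : ~~ is_loop rkN f -> V \subset U :|: cs setT f -> cs Y f \subset U ->
  rkP V + rkM Y <= rkP U + rkM setT.
Proof.
move=> hf h1 h2.
rewrite -(rkP_cs hP Y hf) -(rkP_cs hP setT hf).
apply: (g_submodI pm ps) => //.
by rewrite subsetI h2 /=; apply/subsetP => p; rewrite !inE => /andP [_ ->].
Qed.

Lemma F2 x y Y W : x != y -> x \in CC -> y \in CC -> rkM Y + rkM W + zz <= Q (cs Y x :|: cs W y).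
Proof.
move=> nxy hx hy.
have [w hw] := third hx hy nxy.
have /and3P [_ nxw nyw] := distinct3 hw.
have [xC yC wC] := in3 hw.
have nx : ~~ is_loop rkN x by apply: Cnl.
have ny : ~~ is_loop rkN y by apply: Cnl.
have ecol : colset EM (C :\ w) = (cs setT x :|: cs setT y) :|: Zs.
  apply/setP => -[e0 f0]; rewrite /Zs /Zp -/CC -hw !inE /=.
  case: (eqVneq f0 x) => [->|n0x] /=; first by rewrite xC nxw.
  case: (eqVneq f0 y) => [->|n0y] /=; first by rewrite yC nyw ?orbT.
  by case: (f0 == w).
have hl := tensor_lower hN hP Mnl (C :\ w).
rewrite ecol hdel // in hl.
have hu := colset_upper hP Zp.
have s1 : rkP ((cs setT x :|: cs setT y) :|: Zs) + rkM Y
    <= rkP ((cs Y x :|: cs setT y) :|: Zs) + rkM setT.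
  apply: swap nx _ _.
    by apply/subsetP => p; rewrite !in_setU !csE in_setT; case: (p \in Zs); case: (p.2 == x); case: (p.2 == y); case: (p.1 \in Y).
  by apply/subsetP => p; rewrite !in_setU => ->.
have s2 : rkP ((cs Y x :|: cs setT y) :|: Zs) + rkM W
    <= rkP ((cs Y x :|: cs W y) :|: Zs) + rkM setT.
  apply: swap ny _ _.
    by apply/subsetP => p; rewrite !in_setU !csE in_setT; case: (p \in Zs); case: (p.2 == x); case: (p.2 == y); case: (p.1 \in Y); case: (p.1 \in W).
  by apply/subsetP => p; rewrite !in_setU => ->; rewrite ?orbT.
have e1 : #|C| - 1 = #|Zp| + 2 by rewrite -Zp_card addnS subn1.
rewrite e1 mulnDr in hl.
rewrite /Q /zz.
exact: (arith5 hl hu s1 s2).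
Qed.

Lemma cs0 f : cs set0 f = set0 :> {set EM * EN}.
Proof. by apply/setP => p; rewrite !inE. Qed.

Lemma F2s x Y : x \in CC -> rkM Y + zz <= Q (cs Y x).
Proof.
move=> hx.
have [y hy nxy] : exists2 y, y \in CC & x != y.
  move: hx; rewrite /CC /C3 !inE => /orP [/orP [] | ] /eqP ->.
  - by exists c2; rewrite ?inE ?eqxx ?orbT.
  - by exists c1; rewrite ?inE ?eqxx ?orbT // eq_sym.
  - by exists c1; rewrite ?inE ?eqxx ?orbT // eq_sym.
have := F2 Y set0 nxy hx hy.
by rewrite cs0 setU0; apply: leq_trans; rewrite leq_add2r leq_addr.
Qed.

Lemma RC e x y w (SS : {set EM * EN}) : [set x; y; w] = CC -> (e, x) \in SS -> (e, y) \in SS ->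
  Q ((e, w) |: SS) <= Q SS.
Proof.
move=> hw hxS hyS.
have /and3P [nxy nxw nyw] := distinct3 hw.
have [xC yC wC] := in3 hw.
rewrite /Q -setUA.
apply: (g_closure1 pm ps (A := rs e (C :\ w))).
  apply/subsetP => -[e0 f0]; rewrite inE /= => /andP [/eqP -> hf0].
  rewrite in_setU.
  case: (eqVneq f0 x) => [->|n0x]; first by rewrite hxS.
  case: (eqVneq f0 y) => [->|n0y]; first by rewrite hyS.
  apply/orP; right; rewrite /Zs /Zp -/CC -hw !inE /=.
  move: hf0; rewrite !inE => /andP [n0w ->].
  by rewrite (negbTE n0x) (negbTE n0y) (negbTE n0w).
have -> : (e, w) |: rs e (C :\ w) = rs e C.
  apply/setP => -[e0 f0]; rewrite !inE /= xpair_eqE.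
  case: (e0 == e) => //=.
  case: (eqVneq f0 w) => [->|] //=; by rewrite wC.
rewrite !(rkP_rs hP Mnl) hdel //; exact: lt_pred.
Qed.
End Circ.

Section Final.
Variables (EM EN : finType) (rkM : {set EM} -> nat) (rkN : {set EN} -> nat)
  (rkP : {set EM * EN} -> nat).
Hypothesis hN : is_matroid rkN.
Hypothesis hP : tensor_product rkM rkN rkP.
Hypothesis Mnl : forall e, ~~ is_loop rkM e.
Variables (m h : nat) (a b c d : {set EM}).
Hypothesis rkMle : forall X, rkM X <= rkM setT.
Hypothesis ra : rkM a = m.
Hypothesis rb : rkM b = m.
Hypothesis rab : rkM (a :|: b) = h.
Hypothesis rac : rkM (a :|: c) = h.
Hypothesis rbc : rkM (b :|: c) = h.
Hypothesis rad : rkM (a :|: d) = h.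
Hypothesis rbd : rkM (b :|: d) = h.
Hypothesis rabc : rkM (a :|: b :|: c) = rkM setT.
Hypothesis rabd : rkM (a :|: b :|: d) = rkM setT.
Hypothesis rcd : rkM (c :|: d) = rkM setT.
Hypothesis ineq : 5 * h < 3 * rkM setT + 2 * m.

Lemma no_circuit (T X : {set EN}) : simplification_set rkN T -> X \subset T -> rkN X < #|X| -> False.
Proof.
move=> hT XT hX.
have [C [CT C3 hCd hdel]] := circuit_exists hN hT XT hX.
have Cnl : forall x, x \in C -> ~~ is_loop rkN x.
  by case: hT => Tnl _ _ x xC; apply: Tnl; apply: (subsetP CT).
have [c1 c1C] : exists c1, c1 \in C by apply/card_gt0P; apply: leq_ltn_trans C3.
have [c2 c2D] : exists c2, c2 \in C :\ c1.
  apply/card_gt0P; have := cardsD1 c1 C; rewrite c1C => hc; move: C3; rewrite hc; by case: #|C :\ c1|.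
have [c3 c3D] : exists c3, c3 \in C :\ c1 :\ c2.
  apply/card_gt0P; have := cardsD1 c1 C; rewrite c1C => hc.
  have := cardsD1 c2 (C :\ c1); rewrite c2D => hc2; move: C3; rewrite hc hc2.
  by case: #|C :\ c1 :\ c2|.
move: c2D c3D; rewrite !inE => /andP [n21 c2C] /andP [n32 /andP [n31 c3C]].
have c12 : c1 != c2 by rewrite eq_sym.
have c13 : c1 != c3 by rewrite eq_sym.
have c23 : c2 != c3 by rewrite eq_sym.
apply: (@K3 EM EN (Q rkP C c1 c2 c3) rkM _ _ c1 c2 c3 (zz rkP C c1 c2 c3) (rkM setT) m h a b c d
   c12 c13 c23) => //.
- exact: (Qmono hP C c1 c2 c3).
- exact: (Qsub hP C c1 c2 c3).
- move=> x y Y W; exact: (F1 hP Cnl hCd c1C c2C c3C c12 c13 c23).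
- move=> x y Y W; exact: (F2 hN hP Mnl Cnl hCd hdel c1C c2C c3C c12 c13 c23).
- move=> x Y; exact: (F1s hP Cnl c1C c2C c3C).
- move=> x Y; exact: (F2s hN hP Mnl Cnl hCd hdel c1C c2C c3C c12 c13 c23).
- move=> e x y w SS; exact: (RC hP Mnl hCd hdel c1C c2C c3C c12 c13 c23).
Qed.

Lemma only_if_free : simplification_free rkN.
Proof.
have [T hT] := exists_simpl hN.
exists T; split => // X XT.
apply/eqP; rewrite eqn_leq (ncard hN) /= leqNgt; apply/negP => hX.
exact: (no_circuit hT XT hX).
Qed.
End Final.

Section IfDir.
Variables (EM EN : finType) (rkM : {set EM} -> nat) (rkN : {set EN} -> nat).
Hypothesis hM : is_matroid rkM.
Hypothesis hN : is_matroid rkN.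
Hypothesis Mnl : forall e, ~~ is_loop rkM e.
Variable T : {set EN}.
Hypothesis hT : simplification_set rkN T.
Hypothesis hfree : forall X : {set EN}, X \subset T -> rkN X = #|X|.
Implicit Types (X Y : {set EN}) (U V : {set EM * EN}) (f x t : EN) (e : EM).

Lemma mmono (A B : {set EM}) : A \subset B -> rkM A <= rkM B. Proof. by case: hM => _ H _; apply: H. Qed.
Lemma msub (A B : {set EM}) : rkM (A :|: B) + rkM (A :&: B) <= rkM A + rkM B. Proof. by case: hM. Qed.
Lemma mcard (A : {set EM}) : rkM A <= #|A|. Proof. by case: hM. Qed.
Lemma m0 : rkM set0 = 0.
Proof. have := mcard set0; rewrite cards0; lia. Qed.
Lemma m1 e : rkM [set e] = 1.
Proof. have := mcard [set e]; have := Mnl e; rewrite /is_loop cards1; lia. Qed.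

Definition cls t := [set f | (f == t) || parallel rkN t f].
Definition proj t U := [set e | [exists f, (f \in cls t) && ((e, f) \in U)]].
Definition rkT U := \sum_(t in T) rkM (proj t U).

Lemma Tnl t : t \in T -> ~~ is_loop rkN t. Proof. by case: hT => H _ _; apply: H. Qed.
Lemma Tnp t t' : t \in T -> t' \in T -> ~~ parallel rkN t t'. Proof. by case: hT => _ H _; apply: H. Qed.

Lemma cls_nl t f : t \in T -> f \in cls t -> ~~ is_loop rkN f.
Proof.
move=> tT; rewrite inE => /orP [/eqP -> |/and4P [_ _ -> _]] //; exact: Tnl.
Qed.

Lemma cls_uniq t t' f : t \in T -> t' \in T -> f \in cls t -> f \in cls t' -> t = t'.
Proof.
move=> tT t'T; rewrite !inE => h1 h2.
case: (eqVneq t t') => // ntt'; exfalso.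
move: h1 h2 => /orP [/eqP e1|p1] /orP [/eqP e2|p2].
- by move: ntt'; rewrite -e1 -e2 eqxx.
- by move: (Tnp t'T tT); rewrite -e1 p2.
- by move: (Tnp tT t'T); rewrite -e2 p1.
- have p2' : parallel rkN f t' by rewrite parallel_sym.
  have h := parallel_trans hN p1 p2' ntt'.
  by move: (Tnp tT t'T); rewrite h.
Qed.

Lemma cls_exists f : ~~ is_loop rkN f -> exists2 t, t \in T & f \in cls t.
Proof.
move=> hf; case: (boolP (f \in T)) => fT.
  by exists f => //; rewrite inE eqxx.
case: hT => _ _ /(_ f hf fT) [t tT pft].
by exists t => //; rewrite inE parallel_sym pft orbT.
Qed.

Lemma proj_mono t U V : U \subset V -> proj t U \subset proj t V.
Proof.
move=> /subsetP h; apply/subsetP => e; rewrite !inE => /existsP [f /andP [fc hu]].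
by apply/existsP; exists f; rewrite fc h.
Qed.

Lemma proj_U t U V : proj t (U :|: V) = proj t U :|: proj t V.
Proof.
apply/setP => e; rewrite !inE; apply/existsP/orP.
  move=> [f /andP [fc]]; rewrite inE => /orP [h|h]; [left|right]; apply/existsP; exists f; by rewrite fc h.
by case => /existsP [f /andP [fc h]]; exists f; rewrite fc inE h ?orbT.
Qed.

Lemma proj_I t U V : proj t (U :&: V) \subset proj t U :&: proj t V.
Proof. by rewrite subsetI !proj_mono ?subsetIl ?subsetIr. Qed.

Lemma rkT_mono U V : U \subset V -> rkT U <= rkT V.
Proof. move=> h; apply: leq_sum => t _; apply: mmono; exact: proj_mono. Qed.

Lemma rkT_sub U V : rkT (U :|: V) + rkT (U :&: V) <= rkT U + rkT V.
Proof.
rewrite /rkT -!big_split /=; apply: leq_sum => t _.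
rewrite proj_U; apply: leq_trans (msub _ _); rewrite leq_add2l; apply: mmono; exact: proj_I.
Qed.

Lemma rkT0 : rkT set0 = 0.
Proof.
rewrite /rkT big1 // => t _.
have -> : proj t set0 = set0.
  by apply/setP => e; rewrite !inE; apply/existsP => -[f]; rewrite !inE andbF.
exact: m0.
Qed.

Lemma proj_one t e f : proj t [set (e, f)] = if f \in cls t then [set e] else set0.
Proof.
apply/setP => e0; rewrite inE; case: ifP => hf.
  rewrite inE; apply/existsP/eqP => [[f0 /andP [_]]|->]; first by rewrite inE xpair_eqE => /andP [/eqP ->].
  by exists f; rewrite hf inE eqxx.
rewrite inE; apply/existsP => -[f0 /andP [h]]; rewrite inE xpair_eqE => /andP [_ /eqP e1]; move: h; by rewrite e1 hf.
Qed.

Lemma rkT1 p : rkT [set p] <= 1.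
Proof.
case: p => e f; rewrite /rkT.
case: (boolP [exists t in T, f \in cls t]) => [/existsP [t /andP [tT ft]] | hn].
  rewrite (bigD1 t) //= proj_one ft m1 big1 // => t' /andP [t'T nt].
  rewrite proj_one; case: ifP => h; last exact: m0.
  by move: nt; rewrite (cls_uniq tT t'T ft h) eqxx.
rewrite big1 // => t tT; rewrite proj_one; case: ifP => h; last exact: m0.
by move: hn; apply: contraNeq => _; apply/existsP; exists t; rewrite tT h.
Qed.

Lemma rkT_card U : rkT U <= #|U|.
Proof.
move: {2}#|U| (leqnn #|U|) => n; elim: n U => [|n IH] U hn.
  have -> : U = set0 by apply/eqP; rewrite -cards_eq0; lia.
  by rewrite rkT0.
case: (set_0Vmem U) => [->|[p pU]]; first by rewrite rkT0.
have hc := cardsD1 p U; rewrite pU in hc.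
have -> : U = [set p] :|: (U :\ p).
  by apply/setP => q; rewrite !inE; case: (eqVneq q p) => [->|].
apply: leq_trans (g_subadd rkT_sub _ _) _.
have := IH (U :\ p) ltac:(lia); have := rkT1 p.
rewrite cardsU1 !inE eqxx /=; lia.
Qed.

Lemma rkT_matroid : is_matroid rkT.
Proof. split; [exact: rkT_card | exact: rkT_mono | exact: rkT_sub]. Qed.
End IfDir.

Section IfDir2.
Variables (EM EN : finType) (rkM : {set EM} -> nat) (rkN : {set EN} -> nat).
Hypothesis hM : is_matroid rkM.
Hypothesis hN : is_matroid rkN.
Hypothesis Mnl : forall e, ~~ is_loop rkM e.
Variable T : {set EN}.
Hypothesis hT : simplification_set rkN T.
Hypothesis hfree : forall X : {set EN}, X \subset T -> rkN X = #|X|.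
Implicit Types (X Y : {set EN}) (U V : {set EM * EN}) (f x t : EN) (e : EM).

Definition TX X := [set t in T | [exists f, (f \in cls rkN t) && (f \in X)]].

Lemma nmono' X Y : X \subset Y -> rkN X <= rkN Y. Proof. exact: nmono. Qed.
Lemma nsub' X Y : rkN (X :|: Y) + rkN (X :&: Y) <= rkN X + rkN Y. Proof. exact: nsub. Qed.

Lemma par_rk t f : parallel rkN t f -> rkN (f |: [set t]) <= rkN [set t].
Proof.
move=> /and4P [_ lt _ /eqP r2].
by rewrite (nonloop1 hN lt) -r2 pair_sym.
Qed.

Lemma rkN_TX X : rkN X = #|TX X|.
Proof.
have hTX : TX X \subset T by apply/subsetP => t; rewrite inE => /andP [].
rewrite -(hfree hTX).
have h1 : rkN (X :|: TX X) <= rkN X.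
  apply: (g_closure nmono' nsub') => t; rewrite inE => /andP [tT /existsP [f /andP [fc fX]]].
  exists [set f]; first by rewrite sub1set.
  move: fc; rewrite inE => /orP [/eqP -> |pf]; first by rewrite setUid.
  by rewrite pair_sym -/([set t; f]) pair_sym (par_rk (_ : parallel rkN f t)) // parallel_sym.
have h2 : rkN (TX X :|: X) <= rkN (TX X).
  apply: (g_closure nmono' nsub') => x xX.
  case: (boolP (is_loop rkN x)) => lx.
    exists set0; first exact: sub0set.
    rewrite setU0; move: lx; rewrite /is_loop => /eqP ->; lia.
  have [t tT xt] := cls_exists hT lx.
  exists [set t].
    by rewrite sub1set inE tT; apply/existsP; exists x; rewrite xt xX.
  move: xt; rewrite inE => /orP [/eqP -> |pt]; first by rewrite setUid.
  exact: par_rk.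
have := nmono' (subsetUl X (TX X)); have := nmono' (subsetUr X (TX X)).
rewrite setUC in h2; lia.
Qed.

Definition rkP' := rkT rkM rkN T.

Lemma proj_rs t e X : proj rkN t [set (e, x) | x in X] =
  if [exists f, (f \in cls rkN t) && (f \in X)] then [set e] else set0.
Proof.
apply/setP => e0; rewrite inE; case: ifP => hf.
  rewrite inE; apply/existsP/eqP => [[f0 /andP [_ /imsetP [x _ [-> _]]]] //|->].
  move: hf => /existsP [f /andP [fc fX]]; exists f; rewrite fc /=; apply/imsetP; by exists f.
rewrite inE; apply/existsP => -[f0 /andP [h /imsetP [x hx [_ e1]]]].
move/negbT: hf => /existsPn /(_ f0); by rewrite h e1 hx.
Qed.

Lemma row_ok e X : rkP' [set (e, x) | x in X] = rkN X.
Proof.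
rewrite rkN_TX /rkP' /rkT.
rewrite (eq_bigr (fun t => [exists f, (f \in cls rkN t) && (f \in X)] : nat)); last first.
  move=> t _; rewrite proj_rs; case: ifP => _; [exact: m1 | exact: m0].
rewrite -sum1_card.
rewrite [RHS](eq_bigl (fun t => (t \in T) && [exists f, (f \in cls rkN t) && (f \in X)])); last first.
  by move=> t; rewrite inE.
rewrite [RHS]big_mkcondr /=; apply: eq_bigr => t _.
by case: [exists f, _].
Qed.

Lemma proj_cs t (Y : {set EM}) f : proj rkN t (cs Y f) = if f \in cls rkN t then Y else set0.
Proof.
apply/setP => e0; rewrite inE; case: ifP => hf.
  apply/existsP/idP => [[f0 /andP [_]]|hy]; first by rewrite csE /= => /andP [].
  by exists f; rewrite hf csE /= hy eqxx.
rewrite inE; apply/existsP => -[f0 /andP [h]]; rewrite csE /= => /andP [_ /eqP e1].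
by move: h; rewrite e1 hf.
Qed.

Lemma col_ok f (Y : {set EM}) : ~~ is_loop rkN f -> rkP' [set (x, f) | x in Y] = rkM Y.
Proof.
move=> hf; rewrite cs_img /rkP' /rkT.
have [t0 t0T ft0] := cls_exists hT hf.
rewrite (bigD1 t0) //= proj_cs ft0 big1 ?addn0 // => t /andP [tT nt].
rewrite proj_cs; case: ifP => h; last exact: m0 hM.
by move: nt; rewrite (cls_uniq hN hT tT t0T h ft0) eqxx.
Qed.

Lemma colL_ok f : is_loop rkN f -> rkP' [set (x, f) | x : EM] = 0.
Proof.
move=> hf; rewrite csT_img /rkP' /rkT big1 // => t tT.
rewrite proj_cs; case: ifP => h; last exact: m0 hM.
by move: (cls_nl hT tT h); rewrite hf.
Qed.

Lemma total_ok : rkP' setT = rkM setT * rkN setT.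
Proof.
rewrite /rkP' /rkT.
rewrite (eq_bigr (fun => rkM setT)); last first.
  move=> t tT; congr rkM; apply/setP => e; rewrite !inE; apply/existsP; exists t.
  by rewrite !inE eqxx.
rewrite sum_nat_const rkN_TX.
have -> : TX setT = T.
  apply/setP => t; rewrite !inE; case: (boolP (t \in T)) => //= tT.
  by apply/existsP; exists t; rewrite !inE eqxx.
by rewrite mulnC.
Qed.

Lemma if_tensor : tensor_product rkM rkN rkP'.
Proof.
split; last exact: total_ok.
split.
- exact: rkT_matroid.
- move=> e _ X; exact: row_ok.
- move=> f hf X; exact: col_ok.
- by move=> e; rewrite (negbTE (Mnl e)).
- exact: colL_ok.
Qed.
End IfDir2.

Theorem corollary2p10 (r : nat) (hr : 4 <= r) (EN : finType)
  (rkN : {set EN} -> nat) (hN : is_matroid rkN) :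
  has_tensor_product (@lindstrom_rk r) rkN <-> simplification_free rkN.
Proof.
have Mnl : forall e, ~~ is_loop (@lindstrom_rk r) e.
  by move=> e; rewrite /is_loop lrk1.
have rT := lrkT hr.
have hv1 : forall s, uniq s -> all (fun i => i < 4) s ->
   @lindstrom_rk r (ps r s) = if has (fun q : nat * nat => all (mem [:: q.1; q.2]) s) hv
     then minn (size s * (r - 2)) (r - 1) else minn (size s * (r - 2)) r.
  move=> s; exact: lrk_ps.
split.
  move=> [rkP hP].
  apply: (only_if_free hN hP Mnl (m := r - 2) (h := r - 1)
    (a := ps r [:: 0]) (b := ps r [:: 1]) (c := ps r [:: 2]) (d := ps r [:: 3])).
  - by move=> X; rewrite rT lrk_le.
  - rewrite hv1 //=; lia.
  - rewrite hv1 //=; lia.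
  - rewrite ps_cat hv1 //=; lia.
  - rewrite ps_cat hv1 //=; lia.
  - rewrite ps_cat hv1 //=; lia.
  - rewrite ps_cat hv1 //=; lia.
  - rewrite ps_cat hv1 //=; lia.
  - rewrite !ps_cat hv1 //= rT; lia.
  - rewrite !ps_cat hv1 //= rT; lia.
  - rewrite ps_cat hv1 //= rT; lia.
  - rewrite rT; lia.
move=> [T [hT hfree]].
exists (rkP' (@lindstrom_rk r) rkN T).
exact: (if_tensor (lind_matroid hr) hN Mnl hT hfree).
Qed.
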